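(* Let $\Psi:(\mathcal{D},\zeta)\to(QSym,\zeta_Q)$ be the unique morphism of combinatorial Hopf algebras. Then $\Psi([X])=U_X$ for every digraph $X$. Equivalently, for $X$ on vertex set $V$ with $|V|=n$ and every composition $\alpha$ of $n$, the coefficient of $M_\alpha$ in $U_X$ equals \[\zeta_\alpha([X])=\sum_{\substack{(V_1,\dots,V_k)\models V\\ \mathrm{type}=\alpha}}\zeta([X|_{V_1}])\cdots\zeta([X|_{V_k}]),\] and in particular equals $\mu_I(X)=\#\{\sigma\in\Sigma_V\mid X\mathrm{Des}(\sigma)\subset I\}$ where $\alpha=\mathrm{comp}(I)$.
   Context: A digraph $X=(V,E)$: $V$ finite, $E\subset\{(u,v)\in V\times V\mid u\ne v\}$; $X|_S$ is the induced subdigraph on $S$. $\mathcal{D}$ is the Hopf algebra over $\mathbb{Q}$ spanned by isomorphism classes of digraphs, graded by number of vertices, with product $[X][Y]=[X\cdot Y]$ (where $X\cdot Y$ is the disjoint union plus all edges from vertices of $X$ to vertices of $Y$) and coproduct $\Delta[X]=\sum_{S\subset V}[X|_S]\otimes[X|_{V\setminus S}]$. The character $\zeta$ is $\zeta([X])=\#\{\sigma\in\Sigma_V\mid X\mathrm{Des}(\sigma)=\emptyset\}$, where $\Sigma_V$ is the set of $V$-listings $\sigma=(\sigma_1,\dots,\sigma_n)$ and $X\mathrm{Des}(\sigma)=\{i\in[n-1]\mid(\sigma_i,\sigma_{i+1})\in E\}$. $QSym$ is the Hopf algebra of quasisymmetric functions with character $\zeta_Q(M_\alpha)=1$ if $\alpha$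 has at most one part and $0$ otherwise; $M_\alpha=\sum_{i_1<\cdots<i_k}x_{i_1}^{a_1}\cdots x_{i_k}^{a_k}$ for $\alpha=(a_1,\dots,a_k)$. The unique morphism is $\Psi(h)=\sum_{\alpha\models n}\zeta_\alpha(h)M_\alpha$ for $h\in\mathcal{D}_n$, with $\zeta_\alpha$ given by the displayed formula on digraphs. $\mathrm{comp}$ is the bijection from subsets $I=\{s_1<\dots<s_{k-1}\}\subset[n-1]$ to compositions $(s_1,s_2-s_1,\dots,n-s_{k-1})$. $F_I=\sum x_{i_1}\cdots x_{i_n}$ over $1\le i_1\le\cdots\le i_n$ with $i_j<i_{j+1}$ for $j\in I$; $U_X=\sum_{\sigma\in\Sigma_V}F_{X\mathrm{Des}(\sigma)}$ (the Redei–Berge symmetric function). *)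

(* Defs.v *)
From HB Require Import structures.
From mathcomp Require Import all_boot all_order all_algebra.
From mathcomp Require Import mpoly.
Set Implicit Arguments. Unset Strict Implicit. Unset Printing Implicit Defensive.
Import GRing.Theory.
Local Open Scope ring_scope.

Section Digraph.
Variables (V : finType) (E : rel V).

Definition listings : {set #|V|.-tuple V} := [set t : #|V|.-tuple V | uniq (tval t)].

(* XDes(s) = { i in [n-1] | (s_i, s_{i+1}) in E }  (1-indexed positions). *)
Definition XDes (s : seq V) : seq nat :=
  [seq p.1.+1 | p <- zip (iota 0 (size s)) (zip s (behead s)) & E p.2.1 p.2.2].

Definition zeta : nat := #|[set t in listings | XDes t == [::]]|.

Definition mu (I : seq nat) : nat :=
  #|[set t in listings | all (fun i => i \in I) (XDes t)]|.
End Digraph.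

Definition induced (V : finType) (E : rel V) (S : {set V}) : rel {x : V | x \in S} :=
  fun x y => E (val x) (val y).

Definition zeta_alpha (V : finType) (E : rel V) (alpha : seq nat) : nat :=
  \sum_(B : {ffun 'I_(size alpha) -> {set V}} |
          [&& [forall i, forall j, (i != j) ==> [disjoint B i & B j]],
              \bigcup_i B i == [set: V] &
              [forall i, #|B i| == nth 0 alpha i]])
     \prod_(i < size alpha) @zeta _ (@induced V E (B i)).

(* comp^{-1}: the subset I = {s_1 < ... < s_{k-1}} of [n-1] of partial sums *)
Definition comp_set (alpha : seq nat) : seq nat :=
  [seq sumn (take i alpha) | i <- iota 1 (size alpha).-1].

(* Fundamental quasisymmetric function F_I of degree n, in the N variables
   x_1..x_N (encoded 'X_0..'X_(N-1)):
   sum over 1 <= i_1 <= ... <= i_n <= N with i_j < i_(j+1) for j in I. *)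
Definition F_poly (N n : nat) (I : seq nat) : {mpoly rat[N]} :=
  \sum_(w : n.-tuple 'I_N |
          sorted leq (map val w) &&
          all (fun j => (nth 0 (map val w) j.-1 < nth 0 (map val w) j)%N) I)
     \prod_(j <- w) 'X_j.

Definition U_poly (V : finType) (E : rel V) (N : nat) : {mpoly rat[N]} :=
  \sum_(t in listings V) F_poly N #|V| (XDes E t).

Definition mono_of (N : nat) (alpha : seq nat) : 'X_{1.. N} :=
  [multinom nth 0%N alpha i | i < N].

(* coefficient of M_alpha in U_X: for a quasisymmetric function this is the
   coefficient of the monomial x_1^{a_1} ... x_k^{a_k}; computed in N = |V|
   variables (enough, since k <= n). *)
Definition coeffM_U (V : finType) (E : rel V) (alpha : seq nat) : rat :=
  (U_poly E #|V|)@_(mono_of #|V| alpha).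

(* Main.v *)
Require Import Defs.
From HB Require Import structures.
From mathcomp Require Import all_boot all_order all_algebra.
From mathcomp Require Import mpoly.

Module PA.
Set Implicit Arguments. Unset Strict Implicit. Unset Printing Implicit Defensive.
Section XD.
Variables (T : Type) (E : rel T).
Definition XDesG (k : nat) (s : seq T) : seq nat :=
  [seq p.1.+1 | p <- zip (iota k (size s)) (zip s (behead s)) & E p.2.1 p.2.2].

Lemma XDesG0 k : XDesG k [::] = [::]. Proof. by []. Qed.
Lemma XDesG1 k x : XDesG k [:: x] = [::]. Proof. by []. Qed.
Lemma XDesGcons k x y s :
  XDesG k [:: x, y & s] = (if E x y then [:: k.+1] else [::]) ++ XDesG k.+1 (y :: s).
Proof. by rewrite /XDesG /=; case: (E x y). Qed.

Lemma XDesG_shift s k : XDesG k s = map (addn k) (XDesG 0 s).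
Proof.
elim: s k => [|x s IH] k //; case: s IH => [|y s] IH //.
rewrite !XDesGcons map_cat IH [XDesG 1 _]IH -map_comp; congr (_ ++ _).
  by case: (E x y) => //=; rewrite addn1.
by apply: eq_map => i /=; rewrite addnA addn1 addSnnS.
Qed.

Lemma XDesG_cat k x s1 y s2 :
  XDesG k ((x :: s1) ++ (y :: s2)) =
  XDesG k (x :: s1) ++ (if E (last x s1) y then [:: k + (size s1).+1] else [::])
        ++ XDesG (k + (size s1).+1) (y :: s2).
Proof.
elim: s1 x k => [|z s1 IH] x k /=.
  by rewrite XDesGcons addn1.
rewrite XDesGcons IH XDesGcons -!catA; congr (_ ++ _).
by rewrite !addSnnS.
Qed.

Lemma XDesG_bound k s : all (fun i => (k < i < k + size s)%N) (XDesG k s).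
Proof.
elim: s k => [|x s IH] k //; case: s IH => [|y s] IH //.
rewrite XDesGcons all_cat; apply/andP; split.
  case: (E x y) => //=; rewrite ltnSn /= andbT addnS ltnS -addn1 leq_add2l //.
apply: sub_all (IH k.+1) => i /andP [H1 H2]; apply/andP; split; [exact: ltnW | by rewrite addnS -addSn].
Qed.


End XD.

Lemma XDesG_map (T U : Type) (E : rel T) (F : rel U) (f : U -> T) k s :
  (forall x y, F x y = E (f x) (f y)) -> XDesG E k (map f s) = XDesG F k s.
Proof.
move=> HF; elim: s k => [|x s IH] k //; case: s IH => [|y s] IH //=.
by rewrite !XDesGcons -IH HF.
Qed.

End PA.
Import PA.

Module PB.
Set Implicit Arguments. Unset Strict Implicit. Unset Printing Implicit Defensive.
Lemma card_listings (T : finType) (P : pred (seq T)) :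
  #|[set t in listings T | P t]| = count P (permutations (enum T)).
Proof.
set L := [seq tval t | t <- enum [set t in listings T | P t]].
have -> : #|[set t in listings T | P t]| = size L by rewrite size_map cardE.
rewrite -size_filter; apply/perm_size/uniq_perm.
- by rewrite map_inj_uniq ?enum_uniq //; exact: val_inj.
- by rewrite filter_uniq // permutations_uniq.
move=> s; rewrite mem_filter mem_permutations; apply/mapP/andP.
  case=> t; rewrite mem_enum !inE => /andP[Ut Pt] ->; split=> //.
  apply: uniq_perm => //; first exact: enum_uniq.
  have Hsz : size (enum T) <= size t by rewrite size_tuple cardE.
  by have [_ H] := @uniq_min_size _ t (enum T) Ut (fun x _ => mem_enum _ x) Hsz.
case=> Ps Hp; have Hs : size s == #|T| by rewrite (perm_size Hp) cardE.
exists (Tuple Hs) => //.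
by rewrite mem_enum !inE /= (perm_uniq Hp) enum_uniq Ps.
Qed.

Lemma count_perm_sig (V : finType) (S : {set V}) (P : pred (seq V)) :
  count (fun t => P (map val t)) (permutations (enum {: {x : V | x \in S}}))
  = count P (permutations (enum S)).
Proof.
rewrite -(count_map (map val) P); apply/permP/uniq_perm.
- by rewrite map_inj_uniq ?permutations_uniq //; apply/inj_map/val_inj.
- exact: permutations_uniq.
have Hv : perm_eq (map val (enum {: {x : V | x \in S}})) (enum S).
  apply: uniq_perm; first by rewrite map_inj_uniq ?enum_uniq //; exact: val_inj.
    exact: enum_uniq.
  move=> x; rewrite mem_enum; apply/mapP/idP.
    by case=> y _ ->; exact: valP.
  by move=> xS; exists (Sub x xS); rewrite ?mem_enum.
move=> s; rewrite mem_permutations; apply/mapP/idP.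
  case=> t; rewrite mem_permutations => Ht ->.
  exact: perm_trans (perm_map val Ht) Hv.
move=> Hp; exists (pmap insub s); last first.
  rewrite (pmap_filter (@insubK _ _ _)); apply/esym/all_filterP/allP => x xs.
  by rewrite isSome_insub; rewrite (perm_mem Hp) mem_enum in xs.
rewrite mem_permutations; apply: uniq_perm; last 2 first.
- exact: enum_uniq.
- by move=> y; rewrite mem_enum -(mem_map val_inj) (pmap_filter (@insubK _ _ _)) mem_filter isSome_insub (perm_mem Hp) mem_enum /= (valP y).
rewrite -(map_inj_uniq val_inj) (pmap_filter (@insubK _ _ _)) filter_uniq //.
by rewrite (perm_uniq Hp) enum_uniq.
Qed.

End PB.
Import PB.

Module PC.
Set Implicit Arguments. Unset Strict Implicit. Unset Printing Implicit Defensive.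
Local Open Scope nat_scope.

Lemma count_partition (T : eqType) (K : finType) (s : seq T) (R : pred T)
  (f : T -> K) (C : pred K) :
  all (fun t => C (f t)) s ->
  count R s = \sum_(k | C k) count (fun t => R t && (f t == k)) s.
Proof.
elim: s => [|x s IH] /=; first by rewrite big1.
move=> /andP[Cx Hs]; rewrite IH // big_split /=; congr (_ + _).
rewrite (bigD1 (f x)) //= eqxx andbT big1 ?addn0 // => k /andP[_ /negbTE].
by rewrite eq_sym => ->; rewrite andbF.
Qed.

Lemma count_allpairs_cat (V : eqType) (a : nat) (P Q : pred (seq V)) s t :
  all (fun x => size x == a) s ->
  count (fun z => P (take a z) && Q (drop a z)) [seq x ++ y | x <- s, y <- t]
  = count P s * count Q t.
Proof.
elim: s => [|x s IH] //= /andP[/eqP Hx Hs].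
rewrite count_cat IH // count_map mulnDl; congr (_ + _).
rewrite (@eq_count _ _ (fun y => P x && Q y)); last first.
  by move=> y /=; rewrite take_size_cat // drop_size_cat.
by case: (P x) => /=; rewrite ?mul1n ?mul0n ?count_pred0.
Qed.

Lemma split_count (V : finType) (U : {set V}) (a : nat) (P Q : pred (seq V)) :
  a <= #|U| ->
  count (fun t => P (take a t) && Q (drop a t)) (permutations (enum U)) =
  \sum_(B : {set V} | (B \subset U) && (#|B| == a))
     count P (permutations (enum B)) * count Q (permutations (enum (U :\: B))).
Proof.
move=> aU.
rewrite (@count_partition _ _ _ _ (fun t => [set x in take a t])
           (fun B => (B \subset U) && (#|B| == a))); last first.
  apply/allP => t; rewrite mem_permutations => Ht.
  have Ut : uniq t by rewrite (perm_uniq Ht) enum_uniq.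
  apply/andP; split.
    apply/subsetP => x; rewrite inE => /mem_take.
    by rewrite (perm_mem Ht) mem_enum.
  rewrite cardsE; apply/eqP; rewrite (card_uniqP (take_uniq a Ut)) size_take.
  by rewrite (perm_size Ht) -cardE; case: ltngtP aU => // -> _.
apply: eq_bigr => B /andP[BU /eqP Ba].
rewrite -count_filter.
rewrite -(@count_allpairs_cat _ a P Q _ (permutations (enum (U :\: B)))); last first.
  apply/allP => x; rewrite mem_permutations => /perm_size ->.
  by rewrite -cardE Ba.
apply/permP/uniq_perm.
- by rewrite filter_uniq // permutations_uniq.
- apply: allpairs_uniq; rewrite ?permutations_uniq //.
  move=> [x1 y1] [x2 y2] /allpairsP[[u v] [/= H1 _ E1]].
  move=> /allpairsP[[u' v'] [/= H2 _ E2]]; case: E1 => -> ->; case: E2 => -> -> /= /eqP.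
  rewrite eqseq_cat; first by case/andP => /eqP -> /eqP ->.
  rewrite mem_permutations in H1; rewrite mem_permutations in H2.
  by rewrite (perm_size H1) (perm_size H2).
move=> z; rewrite mem_filter mem_permutations; apply/andP/allpairsP.
  case=> /eqP Bz Hz; exists (take a z, drop a z); rewrite /= cat_take_drop.
  have Uz : uniq z by rewrite (perm_uniq Hz) enum_uniq.
  have Hu := Uz; rewrite -(cat_take_drop a z) cat_uniq in Hu.
  case/and3P: Hu => Ut Hd Ud.
  split=> //; rewrite mem_permutations; apply: uniq_perm => //; try exact: enum_uniq.
    by move=> x; rewrite mem_enum -Bz inE.
  move=> x; rewrite mem_enum !inE -Bz inE -(mem_enum U) -(perm_mem Hz).
  have -> : (x \in z) = (x \in take a z) || (x \in drop a z).
    by rewrite -mem_cat cat_take_drop.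
  case Hxd: (x \in drop a z); last by rewrite orbF andNb.
  rewrite orbT andbT; apply/esym/negP => Hxt; case/negP: Hd; apply/hasP.
  by exists x.
case=> [[x y] [/= Hx Hy ->]]; rewrite mem_permutations in Hx; rewrite mem_permutations in Hy.
have sx : size x = a by rewrite (perm_size Hx) -cardE.
rewrite take_size_cat //; split.
  by apply/eqP/setP => w; rewrite inE (perm_mem Hx) mem_enum.
apply: uniq_perm; last 2 first.
- exact: enum_uniq.
- move=> w; rewrite mem_cat (perm_mem Hx) (perm_mem Hy) !mem_enum !inE.
  by case Hw: (w \in B) => //=; rewrite (subsetP BU).
rewrite cat_uniq (perm_uniq Hx) (perm_uniq Hy) !enum_uniq /= andbT.
apply/hasP => -[w]; rewrite (perm_mem Hy) (perm_mem Hx) !mem_enum !inE.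
by case/andP => /negbTE ->.
Qed.

End PC.
Import PC.

Module PD.
Set Implicit Arguments. Unset Strict Implicit. Unset Printing Implicit Defensive.
Local Open Scope nat_scope.

Lemma comp_set_cons a b al :
  comp_set (a :: b :: al) = a :: map (addn a) (comp_set (b :: al)).
Proof.
rewrite /comp_set /= addn0 -map_comp; congr (_ :: _).
rewrite -[2]/(1 + 1) iotaDl -map_comp; apply: eq_map => i /=.
by [].
Qed.

Lemma all_nil_of_bound (l C : seq nat) a :
  all (fun i => i < a) l -> all (fun c => a <= c) C ->
  all (fun i => i \in C) l = (l == [::]).
Proof.
case: l => [|i l] //= /andP[ia _] HC; apply/negbTE/negP => /andP[iC _].
by have := allP HC i iC; rewrite leqNgt ia.
Qed.

Section Z.
Variables (V : finType) (E : rel V).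

Definition Good (C : seq nat) (t : seq V) := all (fun i => i \in C) (XDesG E 0 t).

Lemma good_cons a b al t1 t2 : 0 < a -> size t1 = a -> t2 != [::] ->
  Good (comp_set (a :: b :: al)) (t1 ++ t2) =
  (XDesG E 0 t1 == [::]) && Good (comp_set (b :: al)) t2.
Proof.
case: t1 => [|x s1] a0 Hs; first by rewrite -Hs in a0.
case: t2 => [|y s2] // _.
rewrite /Good (XDesG_cat E 0 x s1 y s2) !all_cat comp_set_cons; set C := comp_set (b :: al).
rewrite (@all_nil_of_bound _ _ a); first last.
- by rewrite /= leqnn; apply/allP => c /mapP[d _ ->]; rewrite leq_addr.
- apply: sub_all (XDesG_bound E 0 (x :: s1)) => i /andP[_]; by rewrite add0n Hs.
congr (_ && _); rewrite add0n -[(size s1).+1]/(size (x :: s1)) Hs.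
have -> : all (fun i => i \in a :: map (addn a) C)
    (if E (last x s1) y then [:: a] else [::]) by case: ifP; rewrite /= ?inE ?eqxx.
rewrite /= XDesG_shift all_map; apply: eq_in_all => i Hi /=.
have := allP (XDesG_bound E 0 (y :: s2)) i Hi => /andP[i0 _].
rewrite in_cons.
have -> : (a + i == a) = false.
  by apply/negbTE; rewrite -{2}[a]addn0 eqn_add2l -lt0n.
by rewrite (mem_map (@addnI a)).
Qed.

Fixpoint Zrec (U : {set V}) (al : seq nat) : nat :=
  if al is a :: al' then
    \sum_(B : {set V} | (B \subset U) && (#|B| == a))
       zeta (@induced V E B) * Zrec (U :\: B) al'
  else (U == set0 : nat).

Lemma zeta_count (B : {set V}) :
  zeta (@induced V E B) = count (fun t => XDesG E 0 t == [::]) (permutations (enum B)).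
Proof.
rewrite /zeta (card_listings (fun s => XDes (@induced V E B) s == [::])) -count_perm_sig.
apply: eq_count => t /=.
by rewrite (@XDesG_map _ _ E (@induced V E B) val).
Qed.

Lemma Zrec_M al (U : {set V}) : all (fun a => 0 < a) al -> #|U| = sumn al ->
  Zrec U al = count (Good (comp_set al)) (permutations (enum U)).
Proof.
elim: al U => [|a al IH] U /=.
  move=> _ /eqP; rewrite cards_eq0 => /eqP ->; rewrite enum_set0; by case: eqP.
move=> /andP[a0 Hal] HU; case: al IH Hal HU => [|b al] IH Hal HU.
  rewrite (eq_bigl (fun B => B == U)); last first.
    move=> B; apply/andP/eqP => [[BU /eqP Ba] | ->].
      by apply/eqP; rewrite eqEcard BU HU Ba addn0 leqnn.
    by rewrite subxx HU addn0 eqxx.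
  rewrite big_pred1_eq setDv /= eqxx muln1 zeta_count; apply: eq_count => t.
  by rewrite /Good /=; case: (XDesG E 0 t).
rewrite (eq_bigr (fun B : {set V} => count (fun t => XDesG E 0 t == [::]) (permutations (enum B)) *
   count (Good (comp_set (b :: al))) (permutations (enum (U :\: B))))); last first.
  move=> B /andP[BU /eqP Ba]; rewrite zeta_count IH //.
  by rewrite cardsD (setIidPr BU) Ba HU addKn.
rewrite -split_count; last by rewrite HU leq_addr.
apply: eq_in_count => t; rewrite mem_permutations => Ht.
have st : size t = a + sumn (b :: al) by rewrite (perm_size Ht) -cardE.
rewrite -[in RHS](cat_take_drop a t) good_cons //.
  by rewrite size_takel // st leq_addr.
rewrite -size_eq0 size_drop st addKn /= -lt0n.
by case/andP: Hal => b0 _; rewrite (leq_trans b0) // leq_addr.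
Qed.
End Z.

End PD.
Import PD.

Module PF.
Set Implicit Arguments. Unset Strict Implicit. Unset Printing Implicit Defensive.

Section F.
Variables (V : finType) (E : rel V).

Local Open Scope ring_scope.
Definition Zal (U : {set V}) (alpha : seq nat) : nat :=
  \sum_(B : {ffun 'I_(size alpha) -> {set V}} |
          [&& [forall i, forall j, (i != j) ==> [disjoint B i & B j]],
              \bigcup_i B i == U &
              [forall i, #|B i| == nth 0 alpha i]])
     \prod_(i < size alpha) @zeta _ (@induced V E (B i)).
Local Close Scope ring_scope.
Local Open Scope nat_scope.

Lemma zeta_alpha_Zal alpha : zeta_alpha E alpha = Zal [set: V] alpha.
Proof. by []. Qed.

Lemma zeta_eq (S1 S2 : {set V}) : S1 = S2 ->
  zeta (@induced V E S1) = zeta (@induced V E S2).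
Proof. by move=> ->. Qed.

Definition hcons k (p : ({set V} * {ffun 'I_k -> {set V}})%type) : {ffun 'I_k.+1 -> {set V}} :=
  [ffun i => if unlift ord0 i is Some j then p.2 j else p.1].

Lemma hcons0 k (p : ({set V} * {ffun 'I_k -> {set V}})%type) : hcons p ord0 = p.1.
Proof. by rewrite ffunE unlift_none. Qed.
Lemma hconsS k (p : ({set V} * {ffun 'I_k -> {set V}})%type) j : hcons p (lift ord0 j) = p.2 j.
Proof. by rewrite ffunE liftK. Qed.

Lemma hcons_bij k : bijective (@hcons k).
Proof.
exists (fun f : {ffun 'I_k.+1 -> {set V}} => (f ord0, [ffun j : 'I_k => f (lift ord0 j)])).
  move=> [x g]; rewrite hcons0; congr (_, _); apply/ffunP => j.
  by rewrite ffunE hconsS.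
move=> f; apply/ffunP => i; case: (unliftP ord0 i) => [j ->|->].
  by rewrite hconsS ffunE.
by rewrite hcons0.
Qed.

Lemma union_disj (x G U : {set V}) :
  ([disjoint x & G] && (x :|: G == U)) = (x \subset U) && (G == U :\: x).
Proof.
apply/andP/andP => [[D /eqP <-]|[xU /eqP ->]]; split.
- exact: subsetUl.
- apply/eqP/setP => v; rewrite !inE; case vx: (v \in x) => //=.
  by rewrite (disjointFr D vx).
- rewrite disjoints_subset; apply/subsetP => v vx; by rewrite !inE vx.
- apply/eqP/setP => v; rewrite !inE; case vx: (v \in x) => //=.
  by rewrite (subsetP xU).
Qed.

Lemma cond_split k a (al : seq nat) (U x : {set V}) (g : {ffun 'I_k -> {set V}}) :
  [&& [forall i, forall j, (i != j) ==> [disjoint hcons (x, g) i & hcons (x, g) j]],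
      \bigcup_i hcons (x, g) i == U &
      [forall i, #|hcons (x, g) i| == nth 0 (a :: al) i]] =
  ((x \subset U) && (#|x| == a)) &&
  [&& [forall i, forall j, (i != j) ==> [disjoint g i & g j]],
      \bigcup_i g i == U :\: x &
      [forall i, #|g i| == nth 0 al i]].
Proof.
have H1 : [forall i, forall j, (i != j) ==> [disjoint hcons (x, g) i & hcons (x, g) j]]
   = [disjoint x & \bigcup_i g i] && [forall i, forall j, (i != j) ==> [disjoint g i & g j]].
  apply/idP/andP.
    move=> /forallP H; split.
      apply/bigcup_disjointP => j _; have := forallP (H ord0) (lift ord0 j).
      by rewrite neq_lift hcons0 hconsS.
    apply/forallP => i; apply/forallP => j; apply/implyP => ij.
    have ne : lift ord0 i != lift ord0 j by apply: contra ij => /eqP /lift_inj ->.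
    have := forallP (H (lift ord0 i)) (lift ord0 j).
    by rewrite ne !hconsS.
  case=> /bigcup_disjointP Dx /forallP Dg; apply/forallP => i; apply/forallP => j.
  apply/implyP.
  case: (unliftP ord0 i) => [i' ->|->]; case: (unliftP ord0 j) => [j' ->|->] => ij.
  - rewrite !hconsS; have := forallP (Dg i') j'.
    have -> // : i' != j' by apply: contra ij => /eqP ->.
  - by rewrite hconsS hcons0 disjoint_sym; apply: Dx.
  - by rewrite hconsS hcons0; apply: Dx.
  - by rewrite eqxx in ij.
have H2 : \bigcup_(i < k.+1) hcons (x, g) i = x :|: \bigcup_i g i.
  rewrite big_ord_recl hcons0; congr (_ :|: _); apply: eq_bigr => i _.
  by rewrite hconsS.
have H3 : [forall i, #|hcons (x, g) i| == nth 0 (a :: al) i] =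
   (#|x| == a) && [forall i, #|g i| == nth 0 al i].
  apply/forallP/andP.
    move=> H; split; first by have := H ord0; rewrite hcons0.
    by apply/forallP => i; have := H (lift ord0 i); rewrite hconsS lift0.
  case=> xa /forallP Hg i; case: (unliftP ord0 i) => [i' ->|->].
    by rewrite hconsS lift0; apply: Hg.
  by rewrite hcons0.
rewrite H1 H2 H3; have := union_disj x (\bigcup_i g i) U.
case: [disjoint x & _]; case: (_ :|: _ == U); case: (x \subset U);
  case: (_ == U :\: x); case: (#|x| == a); case: [forall i, forall j, _];
  by case: [forall i, #|g i| == _].
Qed.

Definition ZalN (U : {set V}) (alpha : seq nat) : nat :=
  \sum_(B : {ffun 'I_(size alpha) -> {set V}} |
          [&& [forall i, forall j, (i != j) ==> [disjoint B i & B j]],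
              \bigcup_i B i == U &
              [forall i, #|B i| == nth 0 alpha i]])
     \prod_(i < size alpha) @zeta _ (@induced V E (B i)).

Lemma Zal_ZalN U al : Zal U al = ZalN U al.
Proof. by []. Qed.

Lemma ZalN_Zrec al (U : {set V}) : ZalN U al = Zrec E U al.
Proof.
elim: al U => [|a al IH] U.
  rewrite /ZalN; change (size [::]) with 0; rewrite (eq_bigl (fun _ => U == set0)); last first.
    move=> B; rewrite big_ord0; apply/idP/idP => [/and3P[_ /eqP <- _] // | /eqP ->].
    apply/and3P; split => //; apply/forallP => i; have := ltn_ord i; by rewrite ltn0.
  rewrite /=; case: (U == set0); last by rewrite big_pred0_eq.
  rewrite (eq_bigr (fun _ => 1)); last by move=> B _; rewrite big_ord0.
  by rewrite sum1_card card_ffun card_ord expn0.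
rewrite /ZalN /= (reindex (@hcons (size al))) /=; last exact/onW_bij/hcons_bij.
rewrite (eq_bigr (fun p : ({set V} * {ffun 'I_(size al) -> {set V}})%type => zeta (@induced V E p.1) *
     \prod_(i < size al) zeta (@induced V E (p.2 i)))); last first.
  move=> p _; rewrite big_ord_recl (zeta_eq (hcons0 p)); congr (_ * _).
  by apply: eq_bigr => i _; exact: zeta_eq (hconsS p i).
rewrite (eq_bigl (fun p : ({set V} * {ffun 'I_(size al) -> {set V}})%type => ((p.1 \subset U) && (#|p.1| == a)) &&
  [&& [forall i, forall j, (i != j) ==> [disjoint p.2 i & p.2 j]],
      \bigcup_i p.2 i == U :\: p.1 &
      [forall i, #|p.2 i| == nth 0 al i]])); last by case=> x g; rewrite cond_split.
rewrite -(pair_big_dep (fun x : {set V} => (x \subset U) && (#|x| == a))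
  (fun x (g : {ffun 'I_(size al) -> {set V}}) =>
  [&& [forall i, forall j, (i != j) ==> [disjoint g i & g j]],
      \bigcup_i g i == U :\: x &
      [forall i, #|g i| == nth 0 al i]])
  (fun x (g : {ffun 'I_(size al) -> {set V}}) => zeta (@induced V E x) *
     \prod_(i < size al) zeta (@induced V E (g i)))) /=.
apply: eq_bigr => x _.
by rewrite -big_distrr /= -IH.
Qed.

Lemma zeta_alpha_Zrec alpha : zeta_alpha E alpha = Zrec E [set: V] alpha.
Proof. by rewrite zeta_alpha_Zal Zal_ZalN ZalN_Zrec. Qed.
End F.

End PF.
Import PF.

Module PG.
Set Implicit Arguments. Unset Strict Implicit. Unset Printing Implicit Defensive.
Local Open Scope nat_scope.

Fixpoint blk (c : nat) (al : seq nat) : seq nat :=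
  if al is a :: al' then nseq a c ++ blk c.+1 al' else [::].

Lemma size_blk c al : size (blk c al) = sumn al.
Proof. by elim: al c => [|a al IH] c //=; rewrite size_cat size_nseq IH. Qed.

Lemma count_blk c al x :
  count_mem x (blk c al) = if c <= x then nth 0 al (x - c) else 0.
Proof.
elim: al c => [|a al IH] c /=; first by case: ifP => // _; rewrite nth_nil.
rewrite count_cat count_nseq IH /=.
case: (ltngtP c x) => [cx|xc|->].
- by rewrite mul0n add0n -(subnSK cx).
- by rewrite mul0n.
- by rewrite mul1n subnn addn0.
Qed.

Lemma path_blk c al d : d <= c -> path leq d (blk c al).
Proof.
elim: al c d => [|a al IH] c d //= dc.
rewrite cat_path; apply/andP; split.
  by elim: a d dc {IH} => [|a IHa] d dc //=; rewrite dc (IHa c (leqnn c)).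
apply: IH; case: a => [|a] //=; first exact: leqW.
have -> : last c (nseq a c) = c by elim: a.
exact: leqnSn.
Qed.

Lemma sorted_blk c al : sorted leq (blk c al).
Proof. exact: (path_sorted (path_blk al (leq0n c))). Qed.

Lemma blk_bound c al : all (fun x => x < c + size al) (blk c al).
Proof.
elim: al c => [|a al IH] c //=; rewrite all_cat; apply/andP; split.
  by apply/allP => x /nseqP[-> _]; rewrite -addn1 leq_add2l.
by apply: sub_all (IH c.+1) => x; rewrite addSnnS.
Qed.

Lemma blk_nth c al j : all (fun a => 0 < a) al -> 0 < j < sumn al ->
  (nth 0 (blk c al) j.-1 < nth 0 (blk c al) j) = (j \in comp_set al).
Proof.
elim: al c j => [|a al IH] c j /=; first by rewrite ltn0 andbF.
move=> /andP[a0 Hal] /andP[j0 ja].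
rewrite !nth_cat !size_nseq !nth_nseq.
case: al IH Hal ja => [|b al] IH Hal ja.
  rewrite /= addn0 in ja; rewrite ja (leq_ltn_trans (leq_pred j) ja) ltnn.
  by rewrite /comp_set.
rewrite comp_set_cons in_cons.
case: (ltngtP j a) => [ja'|aj|->].
- rewrite (leq_ltn_trans (leq_pred j) ja') ltnn /=; apply/esym/negbTE/negP.
  case/mapP => y _ jy; move: ja'; rewrite jy ltnNge; by rewrite leq_addr.
- have Hj1 : (j.-1 < a) = false by rewrite -ltnS prednK // ltnNge aj.
  rewrite Hj1 /=.
  have -> : j.-1 - a = (j - a).-1 by rewrite -subn1 -subnDA addnC subnDA subn1.
  have Hja : 0 < j - a < sumn (b :: al).
    by rewrite subn_gt0 aj /= -(ltn_add2l a) (subnKC (ltnW aj)).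
  rewrite (IH c.+1 (j - a) Hal Hja).
  by rewrite -{2}(subnKC (ltnW aj)) (mem_map (@addnI a)).
- rewrite ltn_predL a0 subnn ?eqxx ?orbT.
  case/andP: Hal => b0 _; clear IH ja; case: b b0 => [|b] // _ /=.
  by rewrite ltnSn.
Qed.

End PG.
Import PG.

Module PH.
Set Implicit Arguments. Unset Strict Implicit. Unset Printing Implicit Defensive.
Import GRing.Theory.
Local Open Scope ring_scope.

Lemma prodX_mono N (w : seq 'I_N) :
  \prod_(j <- w) ('X_j : {mpoly rat[N]}) = 'X_[(\sum_(j <- w) U_(j))%MM].
Proof.
have := @mpolyX_prod N rat (map (fun j => U_(j)%MM) w) xpredT.
rewrite !big_map /=; exact: id.
Qed.

Lemma count_mnm N (w : seq 'I_N) (i : 'I_N) :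
  (\sum_(j <- w) U_(j))%MM i = count_mem (val i) (map val w).
Proof.
rewrite mnm_sumE; elim: w => [|j w IH]; first by rewrite big_nil.
by rewrite big_cons IH mnm1E.
Qed.

Lemma F_coeff N n I alpha :
  all (fun a => 0 < a)%N alpha -> sumn alpha = n -> (size alpha <= N)%N ->
  all (fun j => 0 < j < n)%N I ->
  (F_poly N n I)@_(mono_of N alpha) = (all (fun j => j \in comp_set alpha) I)%:R.
Proof.
move=> Hpos Hsum HN HI.
set s0 := blk 0 alpha.
have Hblk : all (fun j => nth 0 s0 j.-1 < nth 0 s0 j)%N I =
            all (fun j => j \in comp_set alpha) I.
  apply: eq_in_all => j jI; rewrite blk_nth //.
  by have := allP HI j jI; rewrite Hsum.
have Hbnd : all (fun x => x < N)%N s0.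
  by apply: sub_all (blk_bound 0 alpha) => x /= /leq_trans; apply.
have key : forall w : n.-tuple 'I_N,
  (sorted leq (map val w) &&
   all (fun j => nth 0 (map val w) j.-1 < nth 0 (map val w) j)%N I) &&
  ((\sum_(j <- w) U_(j))%MM == mono_of N alpha) =
  (map val w == s0) && all (fun j => j \in comp_set alpha) I.
  move=> w.
  have Hm : ((\sum_(j <- w) U_(j))%MM == mono_of N alpha) =
            [forall i : 'I_N, count_mem (val i) (map val w) == nth 0 alpha i].
    apply/eqP/forallP => [H i | H].
      by rewrite -count_mnm H mnmE.
    by apply/mnmP => i; rewrite count_mnm mnmE; apply/eqP.
  rewrite Hm; apply/idP/idP.
    case/andP => /andP[Hs Hc] /forallP Hcnt.
    have E0 : map val w = s0.
      apply: (sorted_eq leq_trans anti_leq) => //; first exact: sorted_blk.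
      apply/allP => x _ /=; rewrite count_blk // subn0.
      case: (ltnP x N) => xN; first by have := Hcnt (Ordinal xN).
      have -> : count_mem x (map val w) = 0%N.
        apply/count_memPn/negP => /mapP[j _ xj].
        by move: (ltn_ord j); rewrite -xj ltnNge xN.
      by rewrite nth_default // (leq_trans HN xN).
    by rewrite E0 eqxx -Hblk -E0.
  case/andP => /eqP E0 Hc.
  have S1 : sorted leq s0 := sorted_blk 0 alpha.
  have S2 : all (fun j => nth 0 s0 j.-1 < nth 0 s0 j)%N I by rewrite Hblk.
  have S3 : [forall i : 'I_N, count_mem (val i) s0 == nth 0 alpha i].
    by apply/forallP => i; rewrite count_blk /= subn0.
  rewrite -E0 in S1 S2 S3; apply/andP; split; first by apply/andP; split.
  exact: S3.
pose ps := pmap (insub : nat -> option 'I_N) s0.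
have Hps : map val ps = s0.
  rewrite (pmap_filter (@insubK _ _ _)); apply/all_filterP.
  by apply: sub_all Hbnd => x; rewrite isSome_insub.
have Hsz : size ps == n by rewrite -(size_map val) Hps size_blk Hsum.
pose w0 : n.-tuple 'I_N := Tuple Hsz.
rewrite /F_poly raddf_sum /=.
rewrite (eq_bigr (fun w : n.-tuple 'I_N =>
   if ((\sum_(j <- w) U_(j))%MM == mono_of N alpha) then 1 else 0)); last first.
  by move=> w _; rewrite prodX_mono mcoeffX; case: (_ == _).
rewrite -big_mkcondr /= (eq_bigl (fun w => (w == w0) && all (fun j => j \in comp_set alpha) I)); last first.
  move=> w; rewrite key; congr (_ && _).
  rewrite -Hps; apply/eqP/eqP => [H|->] //.
  by apply: val_inj; apply: (inj_map val_inj).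
case: (all _ I).
  by rewrite (eq_bigl (pred1 w0)) ?big_pred1_eq // => w; rewrite andbT.
by rewrite big_pred0 // => w; rewrite andbF.
Qed.

End PH.
Import PH.

Unset Implicit Arguments. Set Strict Implicit. Set Printing Implicit Defensive.
Import GRing.Theory.
Local Open Scope ring_scope.

Lemma size_le_sumn (al : seq nat) : all (fun a => 0 < a)%N al -> (size al <= sumn al)%N.
Proof.
elim: al => [|a al IH] //= /andP[a0 H]; rewrite -add1n leq_add //; exact: IH.
Qed.

Theorem mainTheorem9 (V : finType) (E : rel V) (Eirr : irreflexive E)
  (alpha : seq nat) (alpha_pos : all (fun a => 0 < a)%N alpha)
  (alpha_sum : sumn alpha = #|V|) :
  coeffM_U E alpha = (zeta_alpha E alpha)%:R /\
  coeffM_U E alpha = (mu E (comp_set alpha))%:R.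
Proof.
have Hmu : mu E (comp_set alpha) = zeta_alpha E alpha.
  rewrite zeta_alpha_Zrec Zrec_M //; last by rewrite cardsT.
  rewrite /mu (card_listings (fun s => all (fun i => i \in comp_set alpha) (XDes E s))).
  have Hp : perm_eq (enum V) (enum [set: V]).
    apply: uniq_perm; rewrite ?enum_uniq // => x.
    by rewrite !mem_enum !inE.
  have /permP H := perm_permutations Hp.
  exact: (H (Good E (comp_set alpha))).
have Hc : coeffM_U E alpha = (mu E (comp_set alpha))%:R.
  rewrite /coeffM_U /U_poly raddf_sum /=.
  rewrite (eq_bigr (fun t : #|V|.-tuple V => ((all (fun j => j \in comp_set alpha) (XDes E t)) : nat)%:R)); last first.
    move=> t _; apply: F_coeff => //.
      by rewrite -alpha_sum size_le_sumn.
    have := XDesG_bound E 0 t; rewrite add0n size_tuple; exact.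
  rewrite -natr_sum /mu; congr (_%:R).
  rewrite (eq_bigr (fun t : #|V|.-tuple V => if all (fun j => j \in comp_set alpha) (XDes E t) then 1%N else 0%N)); last first.
    by move=> t _; case: (all _ _).
  by rewrite -big_mkcondr sum1dep_card.
by split => //; rewrite Hc Hmu.
Qed.
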